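(* Let $F\in\mathbb{R}^{n\times n}$, $L\in\mathbb{R}^{n\times m}$, and let $\Sigma\in\mathbb{R}^{m\times m}$ be symmetric positive definite with symmetric square root $\Sigma^{1/2}$. Let $\alpha>0$ and $\bar v>0$, and set $\bar\omega=\alpha+\bar v$. Suppose there exist a symmetric positive definite matrix $\mathcal{P}\in\mathbb{R}^{n\times n}$ and a scalar $b\in(0,1)$ such that $$\begin{bmatrix} b\mathcal{P} & F^T \mathcal{P} & 0 & 0 & 0 & 0\\ \mathcal{P} F & \mathcal{P} & \mathcal{P} & -\mathcal{P} L \Sigma^{1/2} & 0 & 0\\ 0 & \mathcal{P} & \tfrac{1-b}{\bar{\omega}}I & 0 & 0 & 0\\ 0 & -\Sigma^{1/2}L^T \mathcal{P} & 0 & \tfrac{1-b}{\bar{\omega}}I & 0 & 0\\ 0 & 0 & 0 & 0 & I & 0\\ 0 & 0 & 0 & 0 & 0 & I \end{bmatrix}\succeq 0 .$$ Then every trajectory of $$e_{k+1}=Fe_k-L\Sigma^{1/2}\zeta_k+v_k,\qquad e_1=0,\quad k\in\mathbb{N},$$ driven by arbitrary sequences $\zeta_k\in\mathbb{R}^m$, $v_k\in\mathbb{R}^n$ with $\|\zeta_k\|^2\le\alpha$ and $\|v_k\|^2\le\bar v$ for all $k$, satisfies $e_k^T\mathcal{P}e_k\le 1$ for all $k\in\mathbb{N}$. In other words, the set $\mathcal{R}$ of all such reachable $e_k$ is contained in the ellipsoid $\{e\in\mathbb{R}^n : e^T\mathcal{P}e\le 1\}$.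
   Context: Setting: an estimation-error system $e_{k+1}=(F-LC)e_k-L\eta_k-L\delta_k+v_k$ with residual $r_k=Ce_k+\eta_k+\delta_k$, where $\eta_k$ is sensor noise, $v_k$ process noise and $\delta_k$ an additive sensor attack. It is rewritten in terms of the normalized residual $\zeta_k:=\Sigma^{-1/2}(Ce_k+\eta_k+\delta_k)$ as $e_{k+1}=Fe_k-L\Sigma^{1/2}\zeta_k+v_k$. A chi-squared detector with threshold $\alpha$ raises an alarm when $\|\zeta_k\|^2>\alpha$. In the paper, $\bar v$ is chosen so that $\Pr[\|v_k\|^2\le\bar v]=1-\mathcal{A}$, with $\mathcal{A}$ the false alarm rate. The set $\mathcal{R}$ (called the $(1-\mathcal{A})$-probable hidden reachable set) is then the set of states reachable from $e_1=0$ when $\|\zeta_k\|^2\le\alpha$ and $\|v_k\|^2\le\bar v$. The matrix inequality $\succeq 0$ means positive semidefinite. *)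

(* Defs.v *)
From HB Require Import structures.
From mathcomp Require Import all_boot all_order all_algebra.
Set Implicit Arguments. Unset Strict Implicit. Unset Printing Implicit Defensive.
Import Order.TTheory GRing.Theory Num.Theory.
Local Open Scope ring_scope.

Definition qform (R : realFieldType) (k : nat) (M : 'M[R]_k) (x : 'cV[R]_k) : R :=
  (x^T *m M *m x) 0 0.

Definition sqnorm (R : realFieldType) (k : nat) (x : 'cV[R]_k) : R :=
  (x^T *m x) 0 0.

Definition sym_mx (R : realFieldType) (k : nat) (M : 'M[R]_k) : Prop :=
  M^T = M.

Definition psd (R : realFieldType) (k : nat) (M : 'M[R]_k) : Prop :=
  sym_mx M /\ forall x : 'cV[R]_k, 0 <= qform M x.

Definition pd (R : realFieldType) (k : nat) (M : 'M[R]_k) : Prop :=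
  sym_mx M /\ forall x : 'cV[R]_k, x != 0 -> 0 < qform M x.

(* The 6x6 block LMI matrix of the theorem; block sizes n,n,n,m,n,m
   (the last two identity blocks are decoupled). S stands for Sigma^{1/2},
   w for omega_bar = alpha + vbar. *)
Definition lmi_mx (R : realFieldType) (n m : nat) (F P : 'M[R]_n)
  (L : 'M[R]_(n, m)) (S : 'M[R]_m) (b w : R)
  : 'M[R]_(n + (n + (n + (m + (n + m))))) :=
  let c := (1 - b) / w in
  let r1 := row_mx (b *: P) (row_mx (F^T *m P) (row_mx (0 : 'M_(n, n))
       (row_mx (0 : 'M_(n, m)) (row_mx (0 : 'M_(n, n)) (0 : 'M_(n, m)))))) in
  let r2 := row_mx (P *m F) (row_mx P (row_mx P
       (row_mx (- (P *m L *m S)) (row_mx (0 : 'M_(n, n)) (0 : 'M_(n, m)))))) in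
  let r3 := row_mx (0 : 'M_(n, n)) (row_mx P (row_mx (c%:M : 'M_n)
       (row_mx (0 : 'M_(n, m)) (row_mx (0 : 'M_(n, n)) (0 : 'M_(n, m)))))) in
  let r4 := row_mx (0 : 'M_(m, n)) (row_mx (- (S *m L^T *m P)) (row_mx (0 : 'M_(m, n))
       (row_mx (c%:M : 'M_m) (row_mx (0 : 'M_(m, n)) (0 : 'M_(m, m)))))) in
  let r5 := row_mx (0 : 'M_(n, n)) (row_mx (0 : 'M_(n, n)) (row_mx (0 : 'M_(n, n))
       (row_mx (0 : 'M_(n, m)) (row_mx (1%:M : 'M_n) (0 : 'M_(n, m)))))) in
  let r6 := row_mx (0 : 'M_(m, n)) (row_mx (0 : 'M_(m, n)) (row_mx (0 : 'M_(m, n))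
       (row_mx (0 : 'M_(m, m)) (row_mx (0 : 'M_(m, n)) (1%:M : 'M_m))))) in
  col_mx r1 (col_mx r2 (col_mx r3 (col_mx r4 (col_mx r5 r6)))).

(* Main.v *)
Require Import Defs.
From HB Require Import structures.
From mathcomp Require Import all_boot all_order all_algebra.
From mathcomp Require Import ring lra.
Import Order.TTheory GRing.Theory Num.Theory.
Local Open Scope ring_scope.

Lemma eD (R : realFieldType) p q (A B : 'M[R]_(p,q)) i j : (A + B) i j = A i j + B i j.
Proof. by rewrite mxE. Qed.
Lemma eN (R : realFieldType) p q (A : 'M[R]_(p,q)) i j : (- A) i j = - A i j.
Proof. by rewrite mxE. Qed.
Lemma eZ (R : realFieldType) p q a (A : 'M[R]_(p,q)) i j : (a *: A) i j = a * A i j.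
Proof. by rewrite mxE. Qed.

Lemma key (R : realFieldType) (n m : nat)
  (F : 'M[R]_n) (L : 'M[R]_(n, m)) (S : 'M[R]_m) (P : 'M[R]_n) (b w : R)
  (x : 'cV[R]_n) (z : 'cV[R]_m) (v : 'cV[R]_n) (e' : 'cV[R]_n) :
  e' = F *m x - L *m S *m z + v -> 
  P^T = P -> S^T = S ->
  qform (lmi_mx F P L S b w) (col_mx x (col_mx (- e') (col_mx v (col_mx z (col_mx (0:'cV_n) (0:'cV_m))))))
  = b * qform P x - qform P e' + ((1 - b)/w) * sqnorm v + ((1-b)/w) * sqnorm z.
Proof.
move=> he hP hS.
have h1 : (e'^T *m P *m e') = x^T *m F^T *m P *m e' + v^T *m P *m e' - z^T *m S *m L^T *m P *m e'.
  rewrite {1}he !linearD !linearN /=. rewrite !trmx_mul hS !mulmxDl !mulNmx !mulmxA. by rewrite addrAC.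
have h2 : (e'^T *m P *m e') = e'^T *m P *m F *m x + e'^T *m P *m v - e'^T *m P *m L *m S *m z.
  rewrite {2}[in X in X = _]he !mulmxDr !mulmxN !mulmxA. by rewrite addrAC.
rewrite /qform /sqnorm /lmi_mx -mulmxA.
rewrite !mul_col_mx !mul_row_col !tr_col_mx !mul_row_col.
rewrite !mul0mx !mulmx0 !addr0 !add0r ?trmx0 ?mul0mx ?addr0.
rewrite !linearN !(mulmxDl, mulmxDr, mulmxN, mulNmx, mul_mx_scalar, scalemxAl, scalemxAr, opprK) !mulmxA.
rewrite /= ?mulmxN ?mulNmx ?mul_mx_scalar -?scalemxAl -?scalemxAr -?scalemxAl ?mulmxA.
rewrite !(eD, eN, eZ).
move/(congr1 (fun A : 'M[R]_1 => A 0 0)): h1; rewrite !(eD, eN, eZ) => h1.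
move/(congr1 (fun A : 'M[R]_1 => A 0 0)): h2; rewrite !(eD, eN, eZ) => h2.
lra.
Qed.

Theorem theorem1 (R : realFieldType) (n m : nat)
  (F : 'M[R]_n) (L : 'M[R]_(n, m)) (Sigma S : 'M[R]_m)
  (alpha vbar : R) (P : 'M[R]_n) (b : R) :
  pd Sigma -> sym_mx S -> S *m S = Sigma ->
  0 < alpha -> 0 < vbar ->
  pd P -> 0 < b -> b < 1 ->
  psd (lmi_mx F P L S b (alpha + vbar)) ->
  forall (e : nat -> 'cV[R]_n) (zeta : nat -> 'cV[R]_m) (v : nat -> 'cV[R]_n),
    e 1%N = 0 ->
    (forall k : nat, (1 <= k)%N -> e k.+1 = F *m e k - L *m S *m zeta k + v k) ->
    (forall k : nat, (1 <= k)%N -> sqnorm (zeta k) <= alpha) ->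
    (forall k : nat, (1 <= k)%N -> sqnorm (v k) <= vbar) ->
    forall k : nat, (1 <= k)%N -> qform P (e k) <= 1.
Proof.
move=> _ hS _ ha hv [hP _] hb0 hb1 [_ hM] e zeta v e1 he hz hvb.
elim=> [//|k IH] _.
case: k IH => [_|k IH].
  by rewrite e1 /qform trmx0 !mul0mx mxE.
have hk : (1 <= k.+1)%N by [].
have := hM (col_mx (e k.+1) (col_mx (- e k.+2) (col_mx (v k.+1) (col_mx (zeta k.+1)
            (col_mx (0:'cV_n) (0:'cV_m)))))).
rewrite (@key _ _ _ F L S P b (alpha+vbar) _ _ _ _ (he _ hk) hP hS).
have := IH hk; have := hz _ hk; have := hvb _ hk.
set c := (1 - b) / (alpha + vbar).
have hc : 0 <= c by apply: divr_ge0; lra.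
have hcw : c * (alpha + vbar) = 1 - b by rewrite /c mulfVK //; apply/lt0r_neq0; lra.
move=> h1 h2 h3 h4.
have : c * sqnorm (v k.+1) <= c * vbar by apply: ler_wpM2l.
have : c * sqnorm (zeta k.+1) <= c * alpha by apply: ler_wpM2l.
have : b * qform P (e k.+1) <= b * 1 by apply: ler_wpM2l => //; lra.
nra.
Qed.
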